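(* Let $p$ be an odd prime and let $\mathcal{A}\subseteq\mathbb{F}_p$. Then \[|T_{2,2}(\mathcal{A}\times\mathcal{A})|\ge \frac{1}{6}\left(|\mathcal{A}|^2-2\right)\cdot|\Delta_{\mathbb{F}_p}(\mathcal{A}\times\mathcal{A})|,\] where $\Delta_{\mathbb{F}_p}(\mathcal{A}\times\mathcal{A})=\{\|\mathbf{x}-\mathbf{y}\|:\mathbf{x},\mathbf{y}\in\mathcal{A}\times\mathcal{A}\}$ is the set of distinct distances determined by points of $\mathcal{A}\times\mathcal{A}$.
   Context: For $\mathbf{x}=(x_1,x_2),\mathbf{y}=(y_1,y_2)\in\mathbb{F}_p^2$, $\|\mathbf{x}-\mathbf{y}\|=(x_1-y_1)^2+(x_2-y_2)^2$. For $\mathcal{E}\subseteq\mathbb{F}_p^2$, a triangle determined by $\mathcal{E}$ is a triple $(\mathbf{x}_1,\mathbf{x}_2,\mathbf{x}_3)$ of points of $\mathcal{E}$. Two triangles $(\mathbf{x}_1,\mathbf{x}_2,\mathbf{x}_3)$ and $(\mathbf{y}_1,\mathbf{y}_2,\mathbf{y}_3)$ are in the same congruence class if there exist an orthogonal $2\times2$ matrix $\theta$ over $\mathbb{F}_p$ ($\theta^T\theta=I$) and $\mathbf{z}\in\mathbb{F}_p^2$ with $\mathbf{z}+\theta\mathbf{x}_i=\mathbf{y}_i$ for $i=1,2,3$. $T_{2,2}(\mathcal{E})$ is the set of congruence classes of triangles determined by points of $\mathcal{E}$. *)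

(* Defs.v *)
From mathcomp Require Import all_boot all_order all_algebra.
Set Implicit Arguments. Unset Strict Implicit. Unset Printing Implicit Defensive.
Import GRing.Theory.
Local Open Scope ring_scope.

Definition pt (p : nat) := 'cV['F_p]_2.

Definition sqdist (p : nat) (x y : pt p) : 'F_p :=
  (x 0 0 - y 0 0) ^+ 2 + (x 1 0 - y 1 0) ^+ 2.

Definition grid (p : nat) (A : {set 'F_p}) : {set pt p} :=
  [set x : pt p | (x 0 0 \in A) && (x 1 0 \in A)].

Definition orthogonal (p : nat) (th : 'M['F_p]_2) : bool := th^T *m th == 1%:M.

Definition triangle (p : nat) := (pt p * pt p * pt p)%type.

Definition congruent (p : nat) (t s : triangle p) : bool :=
  [exists th : 'M['F_p]_2, exists z : pt p,
     [&& orthogonal th,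
         z + th *m t.1.1 == s.1.1,
         z + th *m t.1.2 == s.1.2 &
         z + th *m t.2 == s.2]].

Definition triangles (p : nat) (E : {set pt p}) : {set triangle p} :=
  [set t : triangle p | [&& t.1.1 \in E, t.1.2 \in E & t.2 \in E]].

Definition T22 (p : nat) (E : {set pt p}) : {set {set triangle p}} :=
  [set [set s : triangle p | congruent t s] | t in triangles E].

Definition distset (p : nat) (E : {set pt p}) : {set 'F_p} :=
  [set sqdist xy.1 xy.2 | xy in setX E E].

(* Main.v *)
Require Import Defs.
From mathcomp Require Import all_boot all_order all_algebra ring.
Set Implicit Arguments. Unset Strict Implicit. Unset Printing Implicit Defensive.
Import GRing.Theory.
Local Open Scope ring_scope.

Arguments sqdist : simpl never.

Lemma core (F : fieldType) (u0 u1 v0 v1 w0 w1 c : F) :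
  (2%:R : F) != 0 -> w0^+2 + w1^+2 != 0 ->
  c * (w0^+2 + w1^+2) = 2%:R * (u0*w0 + u1*w1) ->
  u0^+2 + u1^+2 = v0^+2 + v1^+2 ->
  (u0 - w0)^+2 + (u1 - w1)^+2 = (v0 - w0)^+2 + (v1 - w1)^+2 ->
  (v0 = u0 /\ v1 = u1) \/ (v0 = c * w0 - u0 /\ v1 = c * w1 - u1).
Proof.
move=> h2 hd hc hu huw.
have ew : (v0 - u0) * w0 + (v1 - u1) * w1 = 0.
  have : 2%:R * ((v0 - u0) * w0 + (v1 - u1) * w1) = ((u0 - w0)^+2 + (u1 - w1)^+2 - ((v0 - w0)^+2 + (v1 - w1)^+2)) - (u0^+2 + u1^+2 - (v0^+2 + v1^+2)) by ring.
  rewrite hu huw !subrr ?subr0 => /eqP; rewrite mulf_eq0 (negbTE h2) /= => /eqP //.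
have fw : (v0 + u0 - c * w0) * w0 + (v1 + u1 - c*w1) * w1 = 0.
  have -> : (v0 + u0 - c * w0) * w0 + (v1 + u1 - c*w1) * w1 = ((v0 - u0) * w0 + (v1 - u1) * w1) + 2%:R * (u0*w0+u1*w1) - c * (w0^+2 + w1^+2) by ring.
  by rewrite ew hc add0r subrr.
have ef : (v0 - u0) * (v0 + u0 - c*w0) + (v1 - u1) * (v1 + u1 - c*w1) = 0.
  have -> : (v0 - u0) * (v0 + u0 - c*w0) + (v1 - u1) * (v1 + u1 - c*w1) = (v0^+2 + v1^+2) - (u0^+2+u1^+2) - c * ((v0 - u0) * w0 + (v1 - u1) * w1) by ring.
  by rewrite ew hu mulr0 !subrr.
have lag : ((v0-u0)*w1 - (v1-u1)*w0) * ((v0+u0-c*w0)*w1 - (v1+u1-c*w1)*w0) = 0.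
  have -> : ((v0-u0)*w1 - (v1-u1)*w0) * ((v0+u0-c*w0)*w1 - (v1+u1-c*w1)*w0) = ((v0 - u0) * (v0 + u0 - c*w0) + (v1 - u1) * (v1 + u1 - c*w1)) * (w0^+2+w1^+2) - ((v0 - u0) * w0 + (v1 - u1) * w1) * ((v0 + u0 - c * w0) * w0 + (v1 + u1 - c*w1) * w1) by ring.
  by rewrite ef ew !mul0r subrr.
have key : forall e0 e1 : F, e0 * w0 + e1 * w1 = 0 -> e0 * w1 - e1 * w0 = 0 -> e0 = 0 /\ e1 = 0.
  move=> e0 e1 h1 h3; split.
    have : e0 * (w0^+2 + w1^+2) = 0.
      have -> : e0 * (w0^+2 + w1^+2) = w0 * (e0 * w0 + e1 * w1) + w1 * (e0 * w1 - e1 * w0) by ring.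
      by rewrite h1 h3 !mulr0 addr0.
    by move/eqP; rewrite mulf_eq0 (negbTE hd) orbF => /eqP.
  have : e1 * (w0^+2 + w1^+2) = 0.
    have -> : e1 * (w0^+2 + w1^+2) = w1 * (e0 * w0 + e1 * w1) - w0 * (e0 * w1 - e1 * w0) by ring.
    by rewrite h1 h3 !mulr0 subrr.
  by move/eqP; rewrite mulf_eq0 (negbTE hd) orbF => /eqP.
move/eqP: lag; rewrite mulf_eq0 => /orP [] /eqP h.
  have [h0 h1] := key _ _ ew h.
  by left; split; apply/eqP; rewrite -subr_eq0; apply/eqP.
have [h0 h1] := key _ _ fw h.
right; split; apply/eqP; rewrite -subr_eq0; apply/eqP.
  by rewrite -h0; ring.
by rewrite -h1; ring.
Qed.

Lemma sum2 (R : nmodType) (F : 'I_2 -> R) : \sum_j F j = F 0 + F 1.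
Proof. rewrite big_ord_recr /= big_ord1. congr (F _ + F _); exact/val_inj. Qed.

Lemma pt_eq p (x y : pt p) : x 0 0 = y 0 0 -> x 1 0 = y 1 0 -> x = y.
Proof.
move=> h0 h1; apply/matrixP => i j; rewrite (ord1 j).
case: i => [[|[|//]]] Hi.
  by have -> : Ordinal Hi = 0 by apply/val_inj.
by have -> : Ordinal Hi = 1 by apply/val_inj.
Qed.

Lemma sqdist_iso p (th : 'M['F_p]_2) (z a b : pt p) : Defs.orthogonal th -> sqdist (z + th *m a) (z + th *m b) = sqdist a b.
Proof.
rewrite /Defs.orthogonal => /eqP/matrixP H.
have H00 := H 0 0; have H11 := H 1 1; have H01 := H 0 1.
move: H00 H11 H01; rewrite /sqdist !mxE !sum2 !mxE /=.
move=> h0 h1 h2.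
have -> : (z 0 0 + (th 0 0 * a 0 0 + th 0 1 * a 1 0) - (z 0 0 + (th 0 0 * b 0 0 + th 0 1 * b 1 0))) ^+ 2 +
  (z 1 0 + (th 1 0 * a 0 0 + th 1 1 * a 1 0) - (z 1 0 + (th 1 0 * b 0 0 + th 1 1 * b 1 0))) ^+ 2
  = (a 0 0 - b 0 0)^+2 * (th 0 0 * th 0 0 + th 1 0 * th 1 0) + (a 1 0 - b 1 0)^+2 * (th 0 1 * th 0 1 + th 1 1 * th 1 1)
    + 2%:R * (a 0 0 - b 0 0) * (a 1 0 - b 1 0) * (th 0 0 * th 0 1 + th 1 0 * th 1 1) by ring.
by rewrite h0 h1 h2 !mulr1 mulr0 addr0.
Qed.

Definition cc p (x y z : pt p) : 'F_p :=
  2%:R * ((z 0 0 - x 0 0) * (y 0 0 - x 0 0) + (z 1 0 - x 1 0) * (y 1 0 - x 1 0)) / sqdist x y.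

Definition sig p (x y z : pt p) : pt p :=
  \col_i (x i 0 + cc x y z * (y i 0 - x i 0) - (z i 0 - x i 0)).

Lemma sub_eq (R : zmodType) (a b x : R) : a - x = b - x -> a = b.
Proof. by move/(congr1 (fun t => t + x)); rewrite !subrK. Qed.

Lemma fiber p (x y z t : pt p) : (2%:R : 'F_p) != 0 -> sqdist x y != 0 ->
  sqdist x z = sqdist x t -> sqdist y z = sqdist y t -> t = z \/ t = sig x y z.
Proof.
move=> h2 hd hxz hyz.
have hw : (y 0 0 - x 0 0)^+2 + (y 1 0 - x 1 0)^+2 = sqdist x y by rewrite /sqdist; ring.
have := @core _ (z 0 0 - x 0 0) (z 1 0 - x 1 0) (t 0 0 - x 0 0) (t 1 0 - x 1 0)
  (y 0 0 - x 0 0) (y 1 0 - x 1 0) (cc x y z) h2.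
rewrite hw => /(_ hd).
have -> : cc x y z * sqdist x y = 2%:R * ((z 0 0 - x 0 0) * (y 0 0 - x 0 0) + (z 1 0 - x 1 0) * (y 1 0 - x 1 0)).
  by rewrite /cc divfK.
have -> : (z 0 0 - x 0 0)^+2 + (z 1 0 - x 1 0)^+2 = sqdist x z by rewrite /sqdist; ring.
have -> : (t 0 0 - x 0 0)^+2 + (t 1 0 - x 1 0)^+2 = sqdist x t by rewrite /sqdist; ring.
have -> : (z 0 0 - x 0 0 - (y 0 0 - x 0 0))^+2 + (z 1 0 - x 1 0 - (y 1 0 - x 1 0))^+2 = sqdist y z by rewrite /sqdist; ring.
have -> : (t 0 0 - x 0 0 - (y 0 0 - x 0 0))^+2 + (t 1 0 - x 1 0 - (y 1 0 - x 1 0))^+2 = sqdist y t by rewrite /sqdist; ring.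
move=> /(_ erefl hxz hyz) [[h0 h1]|[h0 h1]]; [left|right]; apply: pt_eq; rewrite ?mxE.
- exact: sub_eq h0.
- exact: sub_eq h1.
- by apply: (sub_eq (x := x 0 0)); rewrite h0; ring.
- by apply: (sub_eq (x := x 1 0)); rewrite h1; ring.
Qed.

Lemma card_2to1 (T U : finType) (f : T -> U) (s : T -> T) (X : {set T}) :
  {in X &, forall a b, f a = f b -> b = a \/ b = s a} -> (#|X| <= 2 * #|f @: X|)%N.
Proof.
move=> H. have [->|[t0 Ht0]] := set_0Vmem X; first by rewrite cards0.
pose h k := odflt t0 [pick t in X | f t == k].
have sub : X \subset (h @: (f @: X)) :|: ((s \o h) @: (f @: X)).
  apply/subsetP => t Ht.
  have hf : f t \in f @: X by apply: imset_f.
  have [Ht' ef] : h (f t) \in X /\ f (h (f t)) = f t.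
    rewrite /h; case: pickP => [t' /andP[? /eqP]|/(_ t)] //=.
    by rewrite Ht eqxx.
  case: (H _ _ Ht' Ht ef) => E; apply/setUP; [left|right]; rewrite {1}E.
    exact: imset_f.
  by apply/imsetP; exists (f t).
apply: (leq_trans (subset_leq_card sub)).
apply: (leq_trans (leq_card_setU _ _)).
by rewrite mul2n -addnn leq_add ?leq_imset_card.
Qed.

Lemma card_factor (T U V : finType) (f : T -> U) (g : T -> V) (X : {set T}) :
  {in X &, forall a b, g a = g b -> f a = f b} -> (#|f @: X| <= #|g @: X|)%N.
Proof.
move=> H. have [->|[t0 Ht0]] := set_0Vmem X; first by rewrite !imset0 cards0.
pose h v := f (odflt t0 [pick t in X | g t == v]).
apply: (leq_trans _ (leq_imset_card h _)); apply: subset_leq_card.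
apply/subsetP => _ /imsetP [t Ht ->].
apply/imsetP; exists (g t); first exact: imset_f.
rewrite /h; case: pickP => [t' /andP[Ht' /eqP e]|/(_ t)] /=.
  by apply: H => //; rewrite e.
by rewrite Ht eqxx.
Qed.

Definition tinv p (t : triangle p) := (sqdist t.1.1 t.1.2, sqdist t.1.1 t.2, sqdist t.1.2 t.2).

Lemma congr_refl p (t : triangle p) : congruent t t.
Proof.
apply/existsP; exists 1%:M; apply/existsP; exists 0.
by rewrite /Defs.orthogonal trmx1 mul1mx eqxx !mul1mx !add0r !eqxx.
Qed.

Lemma tinv_cls p (t t' : triangle p) :
  [set s | congruent t s] = [set s | congruent t' s] -> tinv t' = tinv t.
Proof.
move=> e; have : t' \in [set s | congruent t s] by rewrite e inE congr_refl.
rewrite inE => /existsP [th /existsP [z /and4P [ho /eqP e1 /eqP e2 /eqP e3]]].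
by rewrite /tinv -e1 -e2 -e3 !sqdist_iso.
Qed.

Definition col2 p (a b : 'F_p) : pt p := \col_(i < 2) (if (i : nat) == 0%N then a else b).

Lemma col2E0 p (a b : 'F_p) : col2 a b 0 0 = a.
Proof. by rewrite mxE. Qed.
Lemma col2E1 p (a b : 'F_p) : col2 a b 1 0 = b.
Proof. by rewrite mxE. Qed.

From mathcomp Require Import zify.

Unset Implicit Arguments.
Set Strict Implicit.

Theorem lemma2p5 (p : nat) (hp : prime p) (hodd : p != 2%N) (A : {set 'F_p}) :
  (((#|A| ^ 2)%N)%:Z - 2) * (#|distset (grid A)|)%:Z <= 6 * (#|T22 (grid A)|)%:Z.
Proof.
have two0 : (2%:R : 'F_p) != 0.
  rewrite -(dvdn_pcharf (pchar_Fp hp)); apply/negP => /(dvdn_leq (isT : (0 < 2)%N)) hle.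
  have := prime_gt1 hp; move: hodd; lia.
set E := grid A; set Dl := distset E.
case: (leqP #|A| 1) => hn.
  have hn2 : (#|A| ^ 2 <= 1)%N by rewrite -(exp1n 2) leq_exp2r.
  have h1 : (((#|A| ^ 2)%N)%:Z - 2) * (#|Dl|)%:Z <= 0.
    by rewrite Num.Theory.mulr_le0_ge0 // Num.Theory.subr_le0; lia.
  have h2 : 0 <= 6 * (#|T22 E|)%:Z by rewrite Num.Theory.mulr_ge0.
  exact: Order.le_trans h1 h2.
have [a [b [Ha Hb ab]]] := card_gt1P hn.
have inE2 : forall u v, u \in A -> v \in A -> col2 u v \in E.
  by move=> u v hu hv; rewrite inE col2E0 col2E1 hu hv.
have hN : (#|A| ^ 2 <= #|E|)%N.
  have <- : #|(fun uv => col2 uv.1 uv.2) @: setX A A| = (#|A| ^ 2)%N.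
    rewrite card_in_imset ?cardsX ?mulnn //.
    move=> [u v] [u' v'] _ _ /= e.
    by have := congr1 (fun x : pt p => (x 0 0, x 1 0)) e; rewrite /= !col2E0 !col2E1.
  apply: subset_leq_card; apply/subsetP => _ /imsetP [[u v] /setXP [hu hv] ->].
  exact: inE2.
have D0 : 0 \in Dl.
  apply/imsetP; exists (col2 a a, col2 a a); first by rewrite inE /= inE2.
  by rewrite /sqdist /= !subrr expr0n /= addr0.
have D1 : (0 < #|Dl :\ (0%R:'F_p)|)%N.
  apply/card_gt0P; exists (sqdist (col2 a a) (col2 b a)).
  rewrite !inE; apply/andP; split.
    rewrite /sqdist !col2E0 !col2E1 subrr expr0n /= addr0 expf_eq0 /= subr_eq0.
    exact: ab.
  by apply/imsetP; exists (col2 a a, col2 b a); rewrite // inE /= !inE2.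
pose pr d := odflt (0, 0) [pick xy in setX E E | sqdist xy.1 xy.2 == d].
have prP : forall d, d \in Dl -> [/\ (pr d).1 \in E, (pr d).2 \in E & sqdist (pr d).1 (pr d).2 = d].
  move=> d /imsetP [xy hxy ->]; rewrite /pr; case: pickP => [[x y] /andP [h /eqP]|/(_ xy)] //=.
    by move: h; rewrite in_setX => /andP [hx hy] e; split.
  by rewrite hxy eqxx.
pose F (dz : 'F_p * pt p) := tinv ((pr dz.1).1, (pr dz.1).2, dz.2).
pose X := setX (Dl :\ 0) E.
pose s (dz : 'F_p * pt p) := (dz.1, sig (pr dz.1).1 (pr dz.1).2 dz.2).
have h1 : (#|X| <= 2 * #|F @: X|)%N.
  apply: (@card_2to1 _ _ F s) => -[d z] [d' z'] /setXP [hd hz] /setXP [hd' hz'].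
  rewrite /F /tinv => e.
  have e1 := congr1 (fun t => t.1.1) e; have e2 := congr1 (fun t => t.1.2) e.
  have e3 := congr1 (fun t => t.2) e; simpl in e1, e2, e3.
  move: hd hd'; rewrite !inE => /andP [dn0 hd] /andP [dn0' hd'].
  have [_ _ q1] := prP _ hd; have [_ _ q2] := prP _ hd'.
  have ed : d' = d by rewrite -q1 -q2 e1.
  subst d'.
  have := fiber two0 _ e2 e3; rewrite q1 => /(_ dn0) [->|->]; [left|right] => //.
have h2 : (#|F @: X| <= #|@tinv p @: triangles E|)%N.
  apply: subset_leq_card; apply/subsetP => _ /imsetP [[d z] /setXP [hd hz] ->].
  move: hd; rewrite inE => /andP [_ hd]; have [q0 q1 _] := prP _ hd.
  by apply: imset_f; rewrite inE /= q0 q1 hz.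
have h3 : (#|@tinv p @: triangles E| <= #|T22 E|)%N.
  by apply: card_factor => t t' _ _ /tinv_cls.
have hX : #|X| = (#|Dl :\ (0%R:'F_p)| * #|E|)%N by rewrite cardsX.
have hD : #|Dl| = (#|Dl :\ (0%R:'F_p)|).+1 by rewrite (cardsD1 (0%R:'F_p) Dl) D0.
have hA2 : (4 <= #|A| ^ 2)%N by rewrite -[4%N]/(2 ^ 2)%N leq_exp2r.
move: h1 h2 h3 hN hD hX hA2 D1.
set n2 := (#|A| ^ 2)%N; set D := #|Dl|; set D' := #|Dl :\ (0%R:'F_p)|; set N := #|E|.
set K := #|F @: X|; set K' := #|@tinv p @: triangles E|; set T := #|T22 E|.
move=> h1 h2 h3 hN hD hX hA2 D1'.
have : (n2 * D' <= N * D')%N by rewrite leq_mul2r hN orbT.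
nia.
Qed.
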